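(* Let $L\in\mathbb{Z}_{>0}$ and let $\mathcal{Z}(\lambda_1,\dots,\lambda_L)=\langle\bar 0|\mathcal{B}(\lambda_1)\cdots\mathcal{B}(\lambda_L)|0\rangle$ be the partition function of the six-vertex model with one reflecting end and domain-wall boundaries (see context). Then, writing $x_i=e^{2\lambda_i}$, one has $\mathcal{Z}(\lambda_1,\dots,\lambda_L)=\bar{\mathcal{Z}}(x_1,\dots,x_L)\prod_{i=1}^{L}x_i^{-L}$, where $\bar{\mathcal{Z}}(x_1,\dots,x_L)$ is a polynomial of degree $2L$ in each of its variables $x_i$.
   Context: Parameters $\gamma,h,\mu_1,\dots,\mu_L\in\mathbb{C}$. Set $a(\lambda)=\sinh(\lambda+\gamma)$, $b(\lambda)=\sinh(\lambda)$, $c(\lambda)=\sinh(\gamma)$. The $R$-matrix $\mathcal{R}(\lambda)\in\mathrm{End}(\mathbb{C}^2\otimes\mathbb{C}^2)$ is, in the basis $e_1\otimes e_1,e_1\otimes e_2,e_2\otimes e_1,e_2\otimes e_2$, the matrix with rows $(a,0,0,0)$, $(0,b,c,0)$, $(0,c,b,0)$, $(0,0,0,a)$ evaluated at $\lambda$. Let $\mathbb{V}_0\cong\mathbb{C}^2$ and $\mathbb{V}_{\mathcal{Q}}=(\mathbb{C}^2)^{\otimes L}$; $\mathcal{R}_{0j}$ acts on $\mathbb{V}_0$ and the $j$-th factor of $\mathbb{V}_{\mathcal{Q}}$. Define $\tau(\lambda)=\mathcal{R}_{0L}(\lambda-\mu_L)\cdots\mathcal{R}_{01}(\lambda-\mu_1)$,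 $\bar\tau(\lambda)=\mathcal{R}_{01}(\lambda+\mu_1)\cdots\mathcal{R}_{0L}(\lambda+\mu_L)$, $\mathcal{K}(\lambda)=\mathrm{diag}(\sinh(h+\lambda),\sinh(h-\lambda))$ on $\mathbb{V}_0$, and $\mathcal{T}(\lambda)=\tau(\lambda)\mathcal{K}(\lambda)\bar\tau(\lambda)=\begin{pmatrix}\mathcal{A}(\lambda)&\mathcal{B}(\lambda)\\ \mathcal{C}(\lambda)&\mathcal{D}(\lambda)\end{pmatrix}$ in $\mathbb{V}_0$, with entries in $\mathrm{End}(\mathbb{V}_{\mathcal{Q}})$. Let $|0\rangle=e_1^{\otimes L}$ and $\langle\bar 0|$ the transpose of $e_2^{\otimes L}$, $e_1=(1,0)^T$, $e_2=(0,1)^T$. *)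

(* Defs.v *)
From HB Require Import structures.
From mathcomp Require Import all_boot all_order all_algebra.
From mathcomp Require Import all_classical all_reals all_analysis.
From mathcomp Require Import complex.
Set Implicit Arguments. Unset Strict Implicit. Unset Printing Implicit Defensive.
Import Order.TTheory GRing.Theory Num.Theory.
Local Open Scope ring_scope.

Section SixVertex.
Variable R : realType.
Local Notation C := R[i].

Definition cexp (z : C) : C :=
  let: Complex a b := z in Complex (expR a * cos b) (expR a * sin b).

Definition csinh (z : C) : C := (cexp z - cexp (- z)) / 2%:R.

(* Basis of V_0 ⊗ V_Q : (auxiliary index, quantum configuration);
   index 0 <-> e_1, index 1 <-> e_2. *)
Definition qidx (L : nat) := {ffun 'I_L -> 'I_2}.
Definition fidx (L : nat) := ('I_2 * qidx L)%type.

Definition fop L := fidx L -> fidx L -> C.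
Definition qop L := qidx L -> qidx L -> C.

Definition fmul L (A B : fop L) : fop L := fun x z => \sum_(y : fidx L) A x y * B y z.
Definition fone L : fop L := fun x z => (x == z)%:R.
Definition qmul L (A B : qop L) : qop L := fun x z => \sum_(y : qidx L) A x y * B y z.
Definition qone L : qop L := fun x z => (x == z)%:R.

(* R-matrix entry  R(lam)_{(i',j'),(i,j)}  in basis e_i ⊗ e_j *)
Definition Rent (gam lam : C) (i' j' i j : 'I_2) : C :=
  if (i' == i) && (j' == j) then
    (if i == j then csinh (lam + gam) else csinh lam)
  else if [&& i' == j, j' == i & i != j] then csinh gam else 0.

Definition Rop L (gam : C) (j : 'I_L) (lam : C) : fop L :=
  fun x y => Rent gam lam x.1 (x.2 j) y.1 (y.2 j) *
             ([forall k, (k != j) ==> (x.2 k == y.2 k)])%:R.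

Definition Kop L (h lam : C) : fop L :=
  fun x y => ((x == y)%:R) * (if x.1 == 0 then csinh (h + lam) else csinh (h - lam)).

(* tau(lam) = R_{0L}(lam-mu_L) ... R_{01}(lam-mu_1) *)
Definition tau L gam (mu : 'I_L -> C) lam : fop L :=
  \big[@fmul L/@fone L]_(j < L) Rop gam (rev_ord j) (lam - mu (rev_ord j)).
Definition taubar L gam (mu : 'I_L -> C) lam : fop L :=
  \big[@fmul L/@fone L]_(j < L) Rop gam j (lam + mu j).

Definition monodromy L gam h mu lam : fop L :=
  fmul (fmul (tau gam mu lam) (@Kop L h lam)) (taubar gam mu lam).

(* B(lam): the (1,2) entry of T(lam) in V_0, an operator on V_Q *)
Definition Bop L gam h mu lam : qop L :=
  fun s' s => monodromy gam h mu lam (0, s') (1, s).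

Definition ket0 L : qidx L := [ffun => 0].
Definition ketbar0 L : qidx L := [ffun => 1].

Definition Zpart L gam h (mu : 'I_L -> C) (lam : 'I_L -> C) : C :=
  (\big[@qmul L/@qone L]_(i < L) Bop gam h mu (lam i)) (ketbar0 L) (ket0 L).

End SixVertex.

(* Main.v *)
Require Import Defs.
From HB Require Import structures.
From mathcomp Require Import all_boot all_order all_algebra.
From mathcomp Require Import all_classical all_reals all_analysis.
From mathcomp Require Import complex.
From mathcomp Require Import ring.
Import Order.TTheory GRing.Theory Num.Theory.
Local Open Scope ring_scope.

Lemma cexpD {R : realType} (a b : R[i]) : cexp (a + b) = cexp a * cexp b.
Proof.
case: a => a1 a2; case: b => b1 b2.
rewrite /cexp /= expRD cosD sinD.
apply/eqP; rewrite eq_complex /=; apply/andP; split; apply/eqP; ring.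
Qed.

Lemma cexp0 {R : realType} : cexp (0 : R[i]) = 1.
Proof. by rewrite /cexp /= expR0 cos0 sin0 !mulr1 mulr0. Qed.

Lemma cexpNr {R : realType} (a : R[i]) : cexp a * cexp (- a) = 1.
Proof. by rewrite -cexpD subrr cexp0. Qed.

Lemma cexp_neq0 {R : realType} (a : R[i]) : cexp a != 0.
Proof.
apply/negP => /eqP H; have := cexpNr a; rewrite H mul0r => /eqP.
by rewrite eq_sym oner_eq0.
Qed.

Lemma cexpN {R : realType} (a : R[i]) : cexp (- a) = (cexp a)^-1.
Proof.
by apply: (mulfI (cexp_neq0 a)); rewrite cexpNr divff // cexp_neq0.
Qed.

Definition PE {R : realType} (n : nat) (f : R[i] -> R[i]) :=
  exists p : {poly R[i]}, (size p <= n.+1)%N /\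
    forall l, f l = p.[cexp l ^+ 2] / cexp l ^+ n.
Definition PF {R : realType} (n : nat) (f : R[i] -> R[i]) :=
  exists p : {poly R[i]}, (size p <= n)%N /\
    forall l, f l = p.[cexp l ^+ 2] * cexp l / cexp l ^+ n.

Lemma PE_ext {R : realType} {n} {f g : R[i] -> R[i]} :
  (forall l, f l = g l) -> PE n f -> PE n g.
Proof. by move=> e [p [hp H]]; exists p; split=> // l; rewrite -e. Qed.
Lemma PF_ext {R : realType} {n} {f g : R[i] -> R[i]} :
  (forall l, f l = g l) -> PF n f -> PF n g.
Proof. by move=> e [p [hp H]]; exists p; split=> // l; rewrite -e. Qed.

Lemma PE0 (R : realType) n : PE n (fun _ : R[i] => 0).
Proof. by exists 0; rewrite size_poly0; split=> // l; rewrite horner0 mul0r. Qed.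
Lemma PF0 (R : realType) n : PF n (fun _ : R[i] => 0).
Proof. by exists 0; rewrite size_poly0; split=> // l; rewrite horner0 !mul0r. Qed.

Lemma PED (R : realType) n (f g : R[i] -> R[i]) :
  PE n f -> PE n g -> PE n (fun l => f l + g l).
Proof.
move=> [p [hp Hp]] [q [hq Hq]]; exists (p + q); split.
  by apply: leq_trans (size_add _ _) _; rewrite geq_max hp hq.
by move=> l; rewrite Hp Hq hornerD mulrDl.
Qed.
Lemma PFD (R : realType) n (f g : R[i] -> R[i]) :
  PF n f -> PF n g -> PF n (fun l => f l + g l).
Proof.
move=> [p [hp Hp]] [q [hq Hq]]; exists (p + q); split.
  by apply: leq_trans (size_add _ _) _; rewrite geq_max hp hq.
by move=> l; rewrite Hp Hq hornerD !mulrDl.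
Qed.

Lemma PEZ {R : realType} {n} (c : R[i]) {f : R[i] -> R[i]} :
  PE n f -> PE n (fun l => f l * c).
Proof.
move=> [p [hp Hp]]; exists (c *: p); split.
  by apply: leq_trans (size_scale_leq _ _) _.
by move=> l; rewrite Hp hornerZ; field; rewrite expf_neq0 // cexp_neq0.
Qed.
Lemma PFZ {R : realType} {n} (c : R[i]) {f : R[i] -> R[i]} :
  PF n f -> PF n (fun l => f l * c).
Proof.
move=> [p [hp Hp]]; exists (c *: p); split.
  by apply: leq_trans (size_scale_leq _ _) _.
by move=> l; rewrite Hp hornerZ; field; rewrite expf_neq0 // cexp_neq0.
Qed.

Lemma PEsum (R : realType) n (I : finType) (F : I -> R[i] -> R[i]) :
  (forall i, PE n (F i)) -> PE n (fun l => \sum_i F i l).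
Proof.
move=> H; have [p Hp] := fin_all_exists H.
exists (\sum_i p i); split.
  apply: (big_ind (fun q : {poly R[i]} => size q <= n.+1)%N).
  - by rewrite size_poly0.
  - by move=> x y hx hy; apply: leq_trans (size_add _ _) _; rewrite geq_max hx hy.
  - by move=> i _; case: (Hp i).
by move=> l; rewrite horner_sum big_distrl; apply: eq_bigr => i _; case: (Hp i).
Qed.
Lemma PFsum (R : realType) n (I : finType) (F : I -> R[i] -> R[i]) :
  (forall i, PF n (F i)) -> PF n (fun l => \sum_i F i l).
Proof.
move=> H; have [p Hp] := fin_all_exists H.
exists (\sum_i p i); split.
  apply: (big_ind (fun q : {poly R[i]} => size q <= n)%N).
  - by rewrite size_poly0.
  - by move=> x y hx hy; apply: leq_trans (size_add _ _) _; rewrite geq_max hx hy.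
  - by move=> i _; case: (Hp i).
move=> l; rewrite horner_sum !big_distrl; apply: eq_bigr => i _; case: (Hp i) => _ ->.
by [].
Qed.

From mathcomp Require Import zify.

Lemma ex_nz {R : realType} (l : R[i]) n : cexp l ^+ n != 0.
Proof. by rewrite expf_neq0 // cexp_neq0. Qed.

Lemma PEM (R : realType) n m (f g : R[i] -> R[i]) :
  PE n f -> PE m g -> PE (n + m) (fun l => f l * g l).
Proof.
move=> [p [hp Hp]] [q [hq Hq]]; exists (p * q); split.
  by have := size_polyMleq p q; lia.
move=> l; rewrite Hp Hq hornerM exprD; field.
by rewrite !ex_nz.
Qed.

Lemma PFFM (R : realType) n m (f g : R[i] -> R[i]) :
  PF n f -> PF m g -> PE (n + m) (fun l => f l * g l).
Proof.
move=> [p [hp Hp]] [q [hq Hq]]; exists (p * q * 'X); split.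
  have := size_polyMleq p q; have := size_polyMleq (p * q) 'X.
  rewrite size_polyX; lia.
move=> l; rewrite Hp Hq !hornerM hornerX exprD; field.
by rewrite !ex_nz.
Qed.

Lemma PEFM (R : realType) n m (f g : R[i] -> R[i]) :
  PE n f -> PF m g -> PF (n + m) (fun l => f l * g l).
Proof.
move=> [p [hp Hp]] [q [hq Hq]]; exists (p * q); split.
  by have := size_polyMleq p q; lia.
move=> l; rewrite Hp Hq hornerM exprD; field.
by rewrite !ex_nz.
Qed.

Lemma PFEM (R : realType) n m (f g : R[i] -> R[i]) :
  PF n f -> PE m g -> PF (n + m) (fun l => f l * g l).
Proof.
move=> [p [hp Hp]] [q [hq Hq]]; exists (p * q); split.
  by have := size_polyMleq p q; lia.
move=> l; rewrite Hp Hq hornerM exprD; field.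
by rewrite !ex_nz.
Qed.

Lemma PEconst {R : realType} (c : R[i]) : PE 0 (fun _ => c).
Proof.
exists c%:P; split; first by rewrite size_polyC leq_b1.
by move=> l; rewrite hornerC expr0 divr1.
Qed.

Lemma PFconst {R : realType} (c : R[i]) : PF 1 (fun _ => c).
Proof.
exists c%:P; split; first by rewrite size_polyC leq_b1.
by move=> l; rewrite hornerC expr1 mulfK // cexp_neq0.
Qed.

Lemma PE_sinh {R : realType} (a : R[i]) : PE 1 (fun l => csinh (l + a)).
Proof.
exists ((- cexp (- a) / 2%:R)%:P + (cexp a / 2%:R)%:P * 'X); split.
  apply: leq_trans (size_add _ _) _; rewrite geq_max; apply/andP; split.
    by rewrite size_polyC; case: (_ != _).
  by apply: leq_trans (size_polyMleq _ _) _; rewrite size_polyX size_polyC; case: (_ != _).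
move=> l; rewrite /csinh !cexpN !cexpD hornerD hornerM hornerX !hornerC; field.
by rewrite !cexp_neq0.
Qed.

Lemma PE_sinhN {R : realType} (a : R[i]) : PE 1 (fun l => csinh (a - l)).
Proof.
exists ((cexp a / 2%:R)%:P + (- cexp (- a) / 2%:R)%:P * 'X); split.
  apply: leq_trans (size_add _ _) _; rewrite geq_max; apply/andP; split.
    by rewrite size_polyC; case: (_ != _).
  by apply: leq_trans (size_polyMleq _ _) _; rewrite size_polyX size_polyC; case: (_ != _).
move=> l; rewrite /csinh opprB !cexpN !cexpD hornerD hornerM hornerX !hornerC !cexpN; field.
by rewrite !cexp_neq0.
Qed.

Definition good {R : realType} {L : nat} n (M : R[i] -> fop R L) :=
  forall x z : fidx L, if x.1 == z.1 then PE n (fun l => M l x z)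
                       else PF n (fun l => M l x z).

Lemma good_ext {R : realType} {L : nat} {n} {M N : R[i] -> fop R L} :
  (forall l x z, M l x z = N l x z) -> good n M -> good n N.
Proof.
move=> e H x z; have := H x z; case: ifP => _ h.
  by apply: (PE_ext _ h).
by apply: (PF_ext _ h).
Qed.

Lemma I2 (a b c : 'I_2) : a != b -> c != a -> c == b.
Proof.
by case: a b c => [[|[|?]]?] [[|[|?]]?] [[|[|?]]?].
Qed.

Lemma good_one {R : realType} {L : nat} : good 0 (fun _ : R[i] => @fone R L).
Proof.
move=> x z; rewrite /fone; case: ifP => h; first exact: PEconst.
have -> : (x == z) = false by apply/negP => /eqP xz; rewrite xz eqxx in h.
exact: PF0.
Qed.

Lemma good_mul {R : realType} {L : nat} {n m} {A B : R[i] -> fop R L} :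
  good n A -> good m B -> good (n + m) (fun l => fmul (A l) (B l)).
Proof.
move=> HA HB x z; rewrite /fmul.
case: ifP => Hxz.
  apply: PEsum => w; have hA := HA x w; have hB := HB w z.
  case: (eqVneq w.1 x.1) => Hwx.
    rewrite Hwx eqxx in hA; rewrite Hwx Hxz in hB; exact: PEM.
  rewrite eq_sym (negbTE Hwx) in hA.
  have Hwz : (w.1 == z.1) = false by rewrite -(eqP Hxz); exact: negbTE.
  rewrite Hwz in hB; exact: PFFM.
apply: PFsum => w; have hA := HA x w; have hB := HB w z.
case: (eqVneq w.1 x.1) => Hwx.
  rewrite Hwx eqxx in hA; rewrite Hwx Hxz in hB; exact: PEFM.
rewrite eq_sym (negbTE Hwx) in hA.
have Hwz : (w.1 == z.1) := @I2 _ _ _ (negbT Hxz) Hwx.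
rewrite Hwz in hB; exact: PFEM.
Qed.

Lemma good_big {R : realType} {L : nat} n (F : 'I_n -> R[i] -> fop R L) :
  (forall j, good 1 (F j)) ->
  good n (fun l => \big[@fmul R L/@fone R L]_(j < n) F j l).
Proof.
elim: n F => [|n IH] F HF.
  by apply: good_ext _ good_one => l x z; rewrite big_ord0.
have := good_mul (HF ord0) (IH _ (fun j => HF (lift ord0 j))); apply: good_ext.
by move=> l x z; rewrite big_ord_recl.
Qed.

Lemma good_Rop {R : realType} {L : nat} (gam s : R[i]) (j : 'I_L) :
  good 1 (fun l => Rop gam j (l + s)).
Proof.
case=> a s1 [b s2]; rewrite /Rop /Rent /=.
case: (eqVneq a b) => [<-|ab].
  rewrite /=; case: (s1 j == s2 j).
    apply: PEZ; case: (a == s2 j).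
      by apply: (PE_ext _ (PE_sinh (s + gam))) => l; rewrite addrA.
    exact: PE_sinh.
  case E: [&& a == s2 j, s1 j == a & a != s2 j].
    by move/and3P: E => [/eqP e1 _ e3]; rewrite e1 eqxx in e3.
  by apply: (PE_ext _ (PE0 _ 1)) => l; rewrite mul0r.
rewrite /=; case: [&& _, _ & _].
  exact/PFZ/PFconst.
by apply: (PF_ext _ (PF0 _ 1)) => l; rewrite mul0r.
Qed.

Lemma good_Kop {R : realType} {L : nat} (h : R[i]) : good 1 (fun l => @Kop R L h l).
Proof.
move=> x z; rewrite /Kop; case: ifP => Hxz.
  apply: (PE_ext _ (PEZ ((x == z)%:R) _)) => [l|]; first by rewrite mulrC.
  case: (x.1 == 0).
    by apply: (PE_ext _ (PE_sinh h)) => l; rewrite addrC.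
  exact: PE_sinhN.
have -> : (x == z) = false by apply/negP => /eqP xz; rewrite xz eqxx in Hxz.
by apply: (PF_ext _ (PF0 _ 1)) => l; rewrite mul0r.
Qed.

Lemma good_mono {R : realType} {L : nat} (gam h : R[i]) mu :
  good (L + 1 + L) (fun l => @monodromy R L gam h mu l).
Proof.
apply: good_mul; first apply: good_mul.
- apply: good_big => j; apply: (good_ext _ (good_Rop gam (- mu (rev_ord j)) (rev_ord j))).
  by [].
- exact: good_Kop.
- apply: good_big => j; exact: good_Rop.
Qed.

Lemma PF_Bop {R : realType} {L : nat} (gam h : R[i]) mu s' s :
  PF (L + 1 + L) (fun l => @Bop R L gam h mu l s' s).
Proof. exact: (good_mono gam h mu (0, s') (1, s)). Qed.
Definition fcons {T : finType} {n} (m : T) (k : {ffun 'I_n -> T}) : {ffun 'I_n.+1 -> T} :=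
  [ffun i => if unlift ord0 i is Some j then k j else m].
Definition ftail {T : finType} {n} (k : {ffun 'I_n.+1 -> T}) : {ffun 'I_n -> T} :=
  [ffun j => k (lift ord0 j)].

Lemma fcons0 {T : finType} {n} m (k : {ffun 'I_n -> T}) : fcons m k ord0 = m.
Proof. by rewrite /fcons ffunE unlift_none. Qed.
Lemma fconsS {T : finType} {n} m (k : {ffun 'I_n -> T}) j : fcons m k (lift ord0 j) = k j.
Proof. by rewrite /fcons ffunE liftK. Qed.

Lemma sum_split {T : finType} {V : nmodType} n (F : {ffun 'I_n.+1 -> T} -> V) :
  \sum_k F k = \sum_(m : T) \sum_(k : {ffun 'I_n -> T}) F (fcons m k).
Proof.
rewrite pair_big /=.
rewrite (reindex (fun p : T * {ffun 'I_n -> T} => fcons p.1 p.2)) //.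
exists (fun k : {ffun 'I_n.+1 -> T} => (k ord0, ftail k)) => [[m k] _|k _] /=.
  rewrite fcons0; congr (_, _); apply/ffunP => j; by rewrite ffunE fconsS.
apply/ffunP => i; rewrite /fcons ffunE; case: unliftP => [j ->|->].
  by rewrite ffunE.
by [].
Qed.

Lemma ftail_fcons {T : finType} {n} m (k : {ffun 'I_n -> T}) : ftail (fcons m k) = k.
Proof. by apply/ffunP => j; rewrite ffunE fconsS. Qed.

Lemma prod_fcons {R : comNzRingType} {N n} (X : 'I_n.+1 -> R) (m : 'I_N) (k : {ffun 'I_n -> 'I_N}) :
  \prod_(i < n.+1) X i ^+ fcons m k i = X ord0 ^+ m * \prod_(i < n) X (lift ord0 i) ^+ k i.
Proof. by rewrite big_ord_recl fcons0; congr (_ * _); apply: eq_bigr => j _; rewrite fconsS. Qed.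

Lemma prod_expand {R : realType} {L : nat} N n
  (b : 'I_n -> qidx L -> qidx L -> 'I_N -> R[i]) :
 exists c : qidx L -> qidx L -> {ffun 'I_n -> 'I_N} -> R[i],
 forall (X D : 'I_n -> R[i]) (G : 'I_n -> qop R L),
  (forall i s t, G i s t = D i * \sum_(m < N) b i s t m * X i ^+ m) ->
  forall s t, (\big[@qmul R L/@qone R L]_(i < n) G i) s t =
    (\sum_(k : {ffun 'I_n -> 'I_N}) c s t k * \prod_(i < n) X i ^+ k i)
      * \prod_(i < n) D i.
Proof.
elim: n b => [|n IH] b.
  exists (fun s t _ => (s == t)%:R) => X D G _ s t.
  rewrite !big_ord0 /qone mulr1; under eq_bigr do rewrite big_ord0 mulr1.
  by rewrite sumr_const card_ffun !card_ord expn0 mulr1n.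

have [c' Hc'] := IH (fun i => b (lift ord0 i)).
exists (fun s t (k : {ffun 'I_n.+1 -> 'I_N}) => \sum_w b ord0 s w (k ord0) * c' w t (ftail k)).
move=> X D G HG s t.
rewrite big_ord_recl /qmul.
have Hr : forall w, (\big[@qmul R L/@qone R L]_(i < n) G (lift ord0 i)) w t =
   (\sum_(k : {ffun 'I_n -> 'I_N}) c' w t k * \prod_(i < n) X (lift ord0 i) ^+ k i)
      * \prod_(i < n) D (lift ord0 i).
  by move=> w; apply: (Hc' (fun i => X (lift ord0 i)) (fun i => D (lift ord0 i))
          (fun i => G (lift ord0 i))) => i s' t'; rewrite HG.
under eq_bigr => w _ do rewrite Hr HG.
rewrite [\prod_(i < n.+1) D i]big_ord_recl sum_split.
transitivity (\sum_w ((\sum_(m < N) b ord0 s w m * X ord0 ^+ m) *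
   (\sum_(k : {ffun 'I_n -> 'I_N}) c' w t k * \prod_(i < n) X (lift ord0 i) ^+ k i))
   * (D ord0 * \prod_(i < n) D (lift ord0 i))).
  by apply: eq_bigr => w _; ring.
rewrite -big_distrl /=; congr (_ * _).
transitivity (\sum_w \sum_(m < N) \sum_(k : {ffun 'I_n -> 'I_N})
   (b ord0 s w m * X ord0 ^+ m) * (c' w t k * \prod_(i < n) X (lift ord0 i) ^+ k i)).
  by apply: eq_bigr => w _; rewrite big_distrlr.
rewrite exchange_big; apply: eq_bigr => m _.
rewrite exchange_big; apply: eq_bigr => k _.
rewrite fcons0 ftail_fcons prod_fcons big_distrl; apply: eq_bigr => w _ /=; ring.
Qed.

Theorem lemma1 (R : realType) (L : nat) (gam h : R[i]) (mu : 'I_L -> R[i]) :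
  (0 < L)%N ->
  exists c : {ffun 'I_L -> 'I_(2 * L).+1} -> R[i],
    forall lam : 'I_L -> R[i],
      Zpart gam h mu lam =
        (\sum_(k : {ffun 'I_L -> 'I_(2 * L).+1})
            c k * \prod_(i < L) cexp (2%:R * lam i) ^+ k i)
        * \prod_(i < L) cexp (2%:R * lam i) ^- L.
Proof.
move=> _.
have HB : forall s' : qidx L, exists f : qidx L -> {poly R[i]}, forall s,
   (size (f s) <= (2 * L).+1)%N /\ forall l,
    Bop gam h mu l s' s = (f s).[cexp l ^+ 2] * cexp l / cexp l ^+ (L + 1 + L).
  move=> s'.
  have H : forall s, exists p : {poly R[i]}, (size p <= (2 * L).+1)%N /\ forall l,
    Bop gam h mu l s' s = p.[cexp l ^+ 2] * cexp l / cexp l ^+ (L + 1 + L).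
    move=> s; have [p [hp Hp]] := PF_Bop gam h mu s' s.
    by exists p; split => //; apply: leq_trans hp _; lia.
  exact: fin_all_exists H.
have [P HP] := fin_all_exists HB.
have [c Hc] := prod_expand (L:=L) (2 * L).+1 L (fun _ s t m => (P s t)`_m).
exists (c (ketbar0 L) (ket0 L)) => lam.
rewrite /Zpart; apply: (Hc (fun i => cexp (2%:R * lam i)) (fun i => cexp (2%:R * lam i) ^- L)
   (fun i => Bop gam h mu (lam i))) => i s t.
have [hs Hs] := HP s t.
have e2 : forall l : R[i], cexp (2%:R * l) = cexp l ^+ 2.
  by move=> l; rewrite mulr_natl mulr2n cexpD expr2.
rewrite Hs e2 -horner_coef_wide //.
have -> : cexp (lam i) ^+ (L + 1 + L) = (cexp (lam i) ^+ 2) ^+ L * cexp (lam i).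
  by rewrite -exprM -exprSr; congr (_ ^+ _); lia.
by field; rewrite !expf_neq0 ?cexp_neq0.
Qed.
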